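(* Let $\mathcal N=\{(M_2,N_1,N_3)\in\mathbb{C}^3\}$ carry the system \[ \dot M_2=N_3,\qquad \dot N_1=-M_2N_3,\qquad \dot N_3=M_2N_1 \] restricted to $N_1^2+N_3^2=1$. For $k\in(0,1]$ let $\Gamma_k$ be the complex phase curve given by $\frac12M_2^2+N_1=2k^2-1$, $N_1^2+N_3^2=1$ (for $k=1$ with the equilibrium $u=(M_2,N_1,N_3)=(0,1,0)$ removed). Let $\Omega$ be the closure of the set of real points of $\Gamma_1$ (i.e. of the union of the two real orbits homoclinic to the hyperbolic equilibrium $u$). Then for every complex neighbourhood $U\subset\mathcal N$ of $\Omega$ there exists $\epsilon>0$ such that for $0<1-k<\epsilon$ the fundamental group $\pi_1(\Gamma_k)$ is generated by loops lying in $U$.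
   Context: Here $\mathcal N$ is identified with the invariant submanifold $\{(\mathbf M,\mathbf N)\in\mathbb{C}^6: M_1=M_3=N_2=0,\ N_1^2+N_3^2=1\}$ of the complexified Euler–Poisson equations $\dot{\mathbf M}=[\mathbf M,\mathbf J\mathbf M]+[\mathbf N,\mathbf L]$, $\dot{\mathbf N}=[\mathbf N,\mathbf J\mathbf M]$ written in a body frame with $\mathbf L=[1,0,0]^T$ and second diagonal entry of $\mathbf J$ equal to $1$; the system above is the restriction to $\mathcal N$, with Hamiltonian $\frac12M_2^2+N_1$. For $k\in(0,1)$, $\Gamma_k$ is a smooth affine elliptic curve (a torus with two points removed). *)

(* Defs.v *)
From Stdlib Require Import Reals List.
From Coquelicot Require Import Coquelicot.
Open Scope R_scope.

Definition pt := (C * C * C)%type.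
Definition M2 (p : pt) : C := fst (fst p).
Definition N1 (p : pt) : C := snd (fst p).
Definition N3 (p : pt) : C := snd p.

Definition OnN (p : pt) : Prop :=
  Cplus (Cmult (N1 p) (N1 p)) (Cmult (N3 p) (N3 p)) = RtoC 1.

Definition u_eq : pt := (RtoC 0, RtoC 1, RtoC 0).

Definition Gamma (k : R) (p : pt) : Prop :=
  Cplus (Cmult (RtoC (1/2)) (Cmult (M2 p) (M2 p))) (N1 p) = RtoC (2 * k ^ 2 - 1)
  /\ OnN p /\ (k = 1 -> p <> u_eq).

Definition is_real_pt (p : pt) : Prop :=
  Im (M2 p) = 0 /\ Im (N1 p) = 0 /\ Im (N3 p) = 0.

Definition dist3 (p q : pt) : R :=
  sqrt (Cmod (Cminus (M2 p) (M2 q)) ^ 2 + Cmod (Cminus (N1 p) (N1 q)) ^ 2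
        + Cmod (Cminus (N3 p) (N3 q)) ^ 2).

Definition Omega (p : pt) : Prop :=
  forall r, 0 < r -> exists q, Gamma 1 q /\ is_real_pt q /\ dist3 p q < r.

Definition nbhd_of_Omega_in_N (U : pt -> Prop) : Prop :=
  (forall p, U p -> OnN p) /\
  (forall p, Omega p -> exists r, 0 < r /\
      forall q, OnN q -> dist3 p q < r -> U q).

(* A path in S parametrized by [0,1]: a continuous map R -> C^3 whose
   restriction to [0,1] takes values in S (every continuous map on [0,1]
   extends continuously to R by constants). *)
Definition path_in (S : pt -> Prop) (g : R -> pt) : Prop :=
  (forall t, continuous g t) /\ (forall t, 0 <= t <= 1 -> S (g t)).

Definition loop_in (S : pt -> Prop) (p : pt) (g : R -> pt) : Prop :=
  path_in S g /\ g 0 = p /\ g 1 = p.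

Definition loop_homotopic (S : pt -> Prop) (p : pt) (g h : R -> pt) : Prop :=
  exists H : R * R -> pt,
    (forall z, continuous H z) /\
    (forall s t, 0 <= s <= 1 -> 0 <= t <= 1 -> S (H (s, t))) /\
    (forall t, 0 <= t <= 1 -> H (0, t) = g t /\ H (1, t) = h t) /\
    (forall s, 0 <= s <= 1 -> H (s, 0) = p /\ H (s, 1) = p).

Definition loop_concat (g h : R -> pt) : R -> pt :=
  fun t => if Rle_dec t (1/2) then g (2 * t) else h (2 * t - 1).
Definition loop_rev (g : R -> pt) : R -> pt := fun t => g (1 - t).
Definition const_loop (p : pt) : R -> pt := fun _ => p.

Definition word_loop (p : pt) (w : list (bool * (R -> pt))) : R -> pt :=
  fold_right (fun (bg : bool * (R -> pt)) (acc : R -> pt) => loop_concat (if fst bg then snd bg else loop_rev (snd bg)) acc)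
             (const_loop p) w.

Definition pi1_generated_by_loops_in (S U : pt -> Prop) (p : pt) : Prop :=
  forall g, loop_in S p g ->
    exists w : list (bool * (R -> pt)),
      (forall bg, In bg w -> loop_in (fun x => S x /\ U x) p (snd bg)) /\
      loop_homotopic S p g (word_loop p w).

(* Main.v *)
Require Import Defs.
From Stdlib Require Import Reals List Lra Psatz Classical.
From Coquelicot Require Import Coquelicot.
Open Scope R_scope.

Lemma cont_pair {X V W : UniformSpace} (f : X -> V) (g : X -> W) x :
  continuous f x -> continuous g x -> continuous (fun y => (f y, g y)) x.
Proof.
  intros Hf Hg.
  apply (continuous_comp_2 f g (fun a b => (a, b))); auto.
  apply (continuous_ext (fun z => z)). intros [a b]; reflexivity.
  apply continuous_id.
Qed.

Lemma cont_fst {X V W : UniformSpace} (f : X -> V * W) x :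
  continuous f x -> continuous (fun y => fst (f y)) x.
Proof.
  intros Hf. apply (continuous_comp f fst); auto.
  destruct (f x); apply continuous_fst.
Qed.

Lemma cont_snd {X V W : UniformSpace} (f : X -> V * W) x :
  continuous f x -> continuous (fun y => snd (f y)) x.
Proof.
  intros Hf. apply (continuous_comp f snd); auto.
  destruct (f x); apply continuous_snd.
Qed.

Lemma cR_plus {X : UniformSpace} (f g : X -> R) x :
  continuous f x -> continuous g x -> continuous (fun y => f y + g y) x.
Proof. intros; apply (continuous_plus f g x); auto. Qed.
Lemma cR_opp {X : UniformSpace} (f : X -> R) x :
  continuous f x -> continuous (fun y => - f y) x.
Proof. intros; apply (continuous_opp f x); auto. Qed.
Lemma cR_minus {X : UniformSpace} (f g : X -> R) x :
  continuous f x -> continuous g x -> continuous (fun y => f y - g y) x.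
Proof. intros; apply cR_plus; auto; apply cR_opp; auto. Qed.
Lemma cR_mult {X : UniformSpace} (f g : X -> R) x :
  continuous f x -> continuous g x -> continuous (fun y => f y * g y) x.
Proof. intros; apply (continuous_mult f g x); auto. Qed.
Lemma cR_const {X : UniformSpace} (c : R) (x : X) : continuous (fun _ => c) x.
Proof. apply continuous_const. Qed.
Lemma cR_inv {X : UniformSpace} (f : X -> R) x :
  continuous f x -> f x <> 0 -> continuous (fun y => / f y) x.
Proof.
  intros Hf H0. apply (continuous_comp f (fun u => / u)); auto.
  apply continuous_Rinv; auto.
Qed.
Lemma cR_sqrt {X : UniformSpace} (f : X -> R) x :
  continuous f x -> continuous (fun y => sqrt (f y)) x.
Proof. intros Hf. apply (continuous_comp f sqrt); auto. apply continuous_sqrt. Qed.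
Lemma cR_abs {X : UniformSpace} (f : X -> R) x :
  continuous f x -> continuous (fun y => Rabs (f y)) x.
Proof. intros Hf. apply (continuous_comp f Rabs); auto. apply continuous_Rabs. Qed.
Lemma cR_div {X : UniformSpace} (f g : X -> R) x :
  continuous f x -> continuous g x -> g x <> 0 -> continuous (fun y => f y / g y) x.
Proof. intros; unfold Rdiv; apply cR_mult; auto; apply cR_inv; auto. Qed.

Lemma Rmin_abs a b : Rmin a b = (a + b - Rabs (a - b)) / 2.
Proof. unfold Rmin; destruct (Rle_dec a b); [rewrite Rabs_left1 by lra|rewrite Rabs_right by lra]; lra. Qed.
Lemma Rmax_abs a b : Rmax a b = (a + b + Rabs (a - b)) / 2.
Proof. unfold Rmax; destruct (Rle_dec a b); [rewrite Rabs_left1 by lra|rewrite Rabs_right by lra]; lra. Qed.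

Lemma cR_min {X : UniformSpace} (f g : X -> R) x :
  continuous f x -> continuous g x -> continuous (fun y => Rmin (f y) (g y)) x.
Proof.
  intros. apply (continuous_ext (fun y => (f y + g y - Rabs (f y - g y)) / 2)).
  intros; rewrite Rmin_abs; auto.
  apply cR_div; [|apply cR_const|lra]. apply cR_minus. apply cR_plus; auto. apply cR_abs, cR_minus; auto.
Qed.
Lemma cR_max {X : UniformSpace} (f g : X -> R) x :
  continuous f x -> continuous g x -> continuous (fun y => Rmax (f y) (g y)) x.
Proof.
  intros. apply (continuous_ext (fun y => (f y + g y + Rabs (f y - g y)) / 2)).
  intros; rewrite Rmax_abs; auto.
  apply cR_div; [|apply cR_const|lra]. apply cR_plus. apply cR_plus; auto. apply cR_abs, cR_minus; auto.
Qed.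

Definition cC {X : UniformSpace} (f : X -> C) x :=
  continuous (fun y => fst (f y)) x /\ continuous (fun y => snd (f y)) x.

Lemma cC_cont {X : UniformSpace} (f : X -> C) x : cC f x -> continuous f x.
Proof.
  intros [H1 H2].
  apply (continuous_ext (fun y => (fst (f y), snd (f y)))).
  intros y; destruct (f y); reflexivity.
  apply (@cont_pair X R_UniformSpace R_UniformSpace); auto.
Qed.
Lemma cont_cC {X : UniformSpace} (f : X -> C) x : continuous f x -> cC f x.
Proof.
  intros H; split.
  apply (@cont_fst X R_UniformSpace R_UniformSpace f x H).
  apply (@cont_snd X R_UniformSpace R_UniformSpace f x H).
Qed.

Lemma cC_plus {X : UniformSpace} (f g : X -> C) x :
  cC f x -> cC g x -> cC (fun y => Cplus (f y) (g y)) x.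
Proof. intros [] []; split; simpl; apply cR_plus; auto. Qed.
Lemma cC_minus {X : UniformSpace} (f g : X -> C) x :
  cC f x -> cC g x -> cC (fun y => Cminus (f y) (g y)) x.
Proof. intros [] []; split; simpl; apply cR_minus; auto. Qed.
Lemma cC_mult {X : UniformSpace} (f g : X -> C) x :
  cC f x -> cC g x -> cC (fun y => Cmult (f y) (g y)) x.
Proof. intros [] []; split; simpl; [apply cR_minus|apply cR_plus]; apply cR_mult; auto. Qed.
Lemma cC_const {X : UniformSpace} (c : C) (x : X) : cC (fun _ => c) x.
Proof. split; apply cR_const. Qed.
Lemma cC_RtoC {X : UniformSpace} (f : X -> R) x :
  continuous f x -> cC (fun y => RtoC (f y)) x.
Proof. intros; split; simpl; auto. apply cR_const. Qed.
Lemma cC_mod {X : UniformSpace} (f : X -> C) x :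
  cC f x -> continuous (fun y => Cmod (f y)) x.
Proof. intros [];  unfold Cmod. apply cR_sqrt. apply cR_plus; simpl; apply cR_mult; auto; apply cR_mult; auto; apply cR_const. Qed.
Lemma cC_conj {X : UniformSpace} (f : X -> C) x :
  cC f x -> cC (fun y => Cconj (f y)) x.
Proof. intros []; split; simpl; auto. apply cR_opp; auto. Qed.

Definition csqrt (w : C) : C :=
  (sqrt ((Cmod w + fst w) / 2), snd w / (2 * sqrt ((Cmod w + fst w) / 2))).

Lemma Cmod_sq (w : C) : Cmod w * Cmod w = fst w * fst w + snd w * snd w.
Proof. unfold Cmod. rewrite sqrt_sqrt. simpl; ring. simpl. nra. Qed.

Lemma Cmod_ge_fst (w : C) : Rabs (fst w) <= Cmod w.
Proof.
  pose proof (Cmod_sq w). pose proof (Cmod_ge_0 w).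
  rewrite <- (Rabs_right (Cmod w)) by lra.
  apply Rsqr_le_abs_0. unfold Rsqr. nra.
Qed.

Lemma csqrt_sq (w : C) : 0 < Cmod w + fst w -> Cmult (csqrt w) (csqrt w) = w.
Proof.
  intros H. destruct w as [x y]. unfold csqrt. simpl fst in *; simpl snd in *.
  pose proof (Cmod_sq (x, y)) as Hm. simpl in Hm.
  set (m := Cmod (x, y)) in *.
  assert (Hs : sqrt ((m + x) / 2) * sqrt ((m + x) / 2) = (m + x) / 2) by (apply sqrt_sqrt; lra).
  assert (Hp : 0 < sqrt ((m + x) / 2)) by (apply sqrt_lt_R0; lra).
  set (s := sqrt ((m + x) / 2)) in *.
  unfold Cmult; simpl. f_equal.
  - replace (s * s - y / (2 * s) * (y / (2 * s))) with (s*s - y*y / (4 * (s*s))) by (field; lra).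
    rewrite Hs. apply Rmult_eq_reg_r with (2 * (m + x)); [|lra]. field_simplify; [|lra]. nra.
  - field. lra.
Qed.

Lemma csqrt_1 : csqrt (RtoC 1) = RtoC 1.
Proof.
  unfold csqrt. rewrite Cmod_1. simpl. replace ((1 + 1) / 2) with 1 by field. rewrite sqrt_1.
  unfold RtoC; f_equal; field.
Qed.

Definition qf (a : C) (rh : R) (z : C) : C :=
  Cplus (RtoC 1) (Cmult (Cmult (RtoC (rh - 1)) z)
     (Cmult (Cconj (Cminus z a)) (RtoC (/ (Cmod (Cminus z a) * Cmod (Cminus z a)))))).

Lemma qf_re (a : C) (rh : R) (z : C) :
  fst a * fst a + snd a * snd a = 1 -> 0 < rh -> 0 < Cmod z ->
  0 < (rh * Cmod z - 1) * (Cmod z - 1) -> 0 < fst (qf a rh z).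
Proof.
  intros Ha Hr Hz Hp.
  pose proof (Cmod_sq z) as Hzm. pose proof (Cmod_sq (Cminus z a)) as Hd.
  unfold qf. generalize Hd. generalize (Cmod (Cminus z a)). intros m Hm0.
  generalize Hzm Hp Hz. generalize (Cmod z). intros r Hzm' Hp' Hz'. clear Hd Hzm Hp Hz.
  destruct z as [x y]; destruct a as [c t]; simpl in *.
  assert (Hd2 : m * m = r * r - 2 * (x * c + y * t) + 1) by nra.
  assert (Hcs : (x * c + y * t) * (x * c + y * t) <= r * r).
  { rewrite Hzm'. replace (x*x+y*y) with ((x*x+y*y)*(c*c+t*t)) by (rewrite Ha; ring). pose proof (Rle_0_sqr (x*t - y*c)). unfold Rsqr in *. nra. }
  assert (Hdr : (x * c + y * t) <= r).
  { destruct (Rle_dec (x * c + y * t) 0); [lra|]. nra. }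
  assert (Hnum : 0 < rh * (r * r) - (rh + 1) * (x * c + y * t) + 1).
  { destruct (Rle_dec (x * c + y * t) 0). nra. nra. }
  assert (Hr1 : r - 1 <> 0). { intro E0. rewrite E0 in Hp'. lra. }
  assert (Hm : 0 < m * m). { pose proof (Rsqr_pos_lt _ Hr1). unfold Rsqr in *. nra. }
  assert (E : 1 + (((rh - 1) * x - 0 * y) * ((x + - c) * / (m * m) - - (y + - t) * 0) -
      ((rh - 1) * y + 0 * x) * ((x + - c) * 0 + - (y + - t) * / (m * m)))
      = (rh * (r * r) - (rh + 1) * (x * c + y * t) + 1) / (m * m)).
  { assert (Hm0' : m <> 0) by (intro E0; rewrite E0 in Hm; lra).
    field_simplify; try exact Hm0'. apply (f_equal (fun u => u / m^2)).
    replace (m^2) with (r * r - 2 * (x * c + y * t) + 1) by (rewrite <- Hd2; ring).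
    replace (r^2) with (x*x+y*y) by (rewrite <- Hzm'; ring). rewrite Hzm'. ring. }
  rewrite E. apply Rdiv_lt_0_compat; auto.
Qed.

Definition cc (k : R) := 2 * k ^ 2 - 1.
Definition sa (k : R) := sqrt (1 - cc k * cc k).
Definition aa (k : R) : C := (cc k, sa k).
Definition ab (k : R) : C := (cc k, - sa k).
Definition zz (q : pt) : C := Cplus (N1 q) (Cmult Ci (N3 q)).
Definition ww (q : pt) : C := Cminus (N1 q) (Cmult Ci (N3 q)).
Definition clamp (d x : R) := Rmax (1 - d) (Rmin (1 + d) x).
Definition rho (d s : R) (q : pt) : R :=
  ((1 - s) * Cmod (zz q) + s * clamp d (Cmod (zz q))) / Cmod (zz q).
Definition Fm (k d s : R) (q : pt) : pt :=
  (Cmult (Cmult (Cmult (M2 q) (csqrt (qf (aa k) (rho d s q) (zz q))))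
                (csqrt (qf (ab k) (rho d s q) (zz q)))) (RtoC (/ sqrt (rho d s q))),
   Cmult (RtoC (1/2)) (Cplus (Cmult (RtoC (rho d s q)) (zz q)) (Cmult (RtoC (/ rho d s q)) (ww q))),
   Cmult (Cmult (RtoC (1/2)) (Copp Ci)) (Cminus (Cmult (RtoC (rho d s q)) (zz q)) (Cmult (RtoC (/ rho d s q)) (ww q)))).

Lemma Ci_sq : Cmult Ci Ci = RtoC (-1).
Proof. unfold Ci, Cmult, RtoC; simpl; f_equal; ring. Qed.

Lemma zw_one q : OnN q -> Cmult (zz q) (ww q) = RtoC 1.
Proof.
  unfold OnN, zz, ww. intros H. rewrite <- H.
  transitivity (N1 q * N1 q - (Ci * Ci) * (N3 q * N3 q))%C. ring.
  rewrite Ci_sq. ring.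
Qed.

Lemma zz_nz q : OnN q -> 0 < Cmod (zz q).
Proof.
  intros H. apply Cmod_gt_0. intro E. pose proof (zw_one q H) as E2. rewrite E in E2.
  rewrite Cmult_0_l in E2. injection E2. lra.
Qed.

Lemma clamp_in d x : 0 < d -> 1 - d <= clamp d x <= 1 + d.
Proof. intros. unfold clamp, Rmax, Rmin. repeat destruct Rle_dec; lra. Qed.
Lemma clamp_id d x : 1 - d <= x <= 1 + d -> clamp d x = x.
Proof. intros. unfold clamp, Rmax, Rmin. repeat destruct Rle_dec; lra. Qed.

Lemma rho_r d s q : 0 < Cmod (zz q) ->
  rho d s q * Cmod (zz q) = (1 - s) * Cmod (zz q) + s * clamp d (Cmod (zz q)).
Proof. intros. unfold rho. field. lra. Qed.

Lemma rho_pos d s q : 0 < d < 1 -> 0 <= s <= 1 -> 0 < Cmod (zz q) -> 0 < rho d s q.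
Proof.
  intros Hd Hs Hr. pose proof (clamp_in d (Cmod (zz q)) (proj1 Hd)).
  unfold rho. apply Rdiv_lt_0_compat; auto.
  destruct (Req_dec s 0). subst. lra. nra.
Qed.

Lemma Fm_fix k d s q : rho d s q = 1 -> Fm k d s q = q.
Proof.
  intros H. unfold Fm. rewrite H.
  assert (Hq : forall a z, qf a 1 z = RtoC 1).
  { intros. unfold qf. replace (1 - 1) with 0 by ring. ring. }
  rewrite !Hq, csqrt_1, sqrt_1, Rinv_1.
  destruct q as [[[m1 m2] [n1 n2]] [n31 n32]]. unfold M2, N1, N3, zz, ww; simpl fst; simpl snd.
  unfold Cmult, Cplus, Cminus, Copp, Ci, RtoC, Cmult; simpl.
  f_equal; [f_equal|]; f_equal; field.
Qed.

Lemma zz_Fm k d s q : rho d s q <> 0 ->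
  zz (Fm k d s q) = Cmult (RtoC (rho d s q)) (zz q).
Proof.
  intros H. unfold zz at 1, Fm, N1, N3; simpl fst; simpl snd.
  set (r := rho d s q). set (z := zz q). set (w := ww q).
  transitivity (RtoC (1/2) * (1 - Ci * Ci) * (RtoC r * z) + RtoC (1/2) * (1 + Ci * Ci) * (RtoC (/ r) * w))%C.
  ring. rewrite Ci_sq. destruct z as [z1 z2]; destruct w as [w1 w2].
  apply injective_projections; simpl; field; auto.
Qed.

Lemma qf_mul a rh z : z <> a -> Cmult (qf a rh z) (Cminus z a) = Cminus (Cmult (RtoC rh) z) a.
Proof.
  intros H. unfold qf.
  assert (Hm : Cmod (Cminus z a) <> 0).
  { intro E. apply H. apply Cmod_eq_0 in E. 
    transitivity (Cplus (Cminus z a) a). ring. rewrite E. ring. }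
  pose proof (Cmod2_conj (Cminus z a)) as E.
  transitivity (Cminus z a + RtoC (rh - 1) * z * ((Cminus z a * Cconj (Cminus z a)) * RtoC (/ (Cmod (z - a) * Cmod (z - a)))))%C.
  ring. rewrite <- E. rewrite <- RtoC_mult.
  replace (Cmod (z - a) ^ 2 * / (Cmod (z - a) * Cmod (z - a))) with 1 by (field; auto).
  destruct z; destruct a; apply injective_projections; simpl; ring.
Qed.

Lemma key_alg (z w a b r ri : C) : Cmult z w = RtoC 1 -> Cmult r ri = RtoC 1 -> Cmult a b = RtoC 1 ->
  Cplus (Cmult (Cmult (Copp (Cmult (Cminus (Cmult r z) a) (Cminus (Cmult r z) b))) w) ri)
        (Cplus (Cmult r z) (Cmult ri w)) = Cplus a b.
Proof.
  intros H1 H2 H3.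
  transitivity (Cplus a b + (a + b - r * z) * ((r * ri - 1) + (z * w - 1) + (r * ri - 1) * (z * w - 1))
                 - (a * b - 1) * w * ri)%C.
  ring. rewrite H1, H2, H3. ring.
Qed.

Lemma onN_alg (Z W : C) :
  Cplus (Cmult (Cmult (RtoC (1/2)) (Cplus Z W)) (Cmult (RtoC (1/2)) (Cplus Z W)))
        (Cmult (Cmult (Cmult (RtoC (1/2)) (Copp Ci)) (Cminus Z W)) (Cmult (Cmult (RtoC (1/2)) (Copp Ci)) (Cminus Z W)))
  = Cmult Z W.
Proof.
  transitivity (RtoC (1/2) * RtoC (1/2) * ((Z + W) * (Z + W) + (Ci * Ci) * ((Z - W) * (Z - W))))%C. ring.
  rewrite Ci_sq. destruct Z, W. apply injective_projections; simpl; field.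
Qed.

Lemma aa_ab k : 0 < k < 1 -> Cmult (aa k) (ab k) = RtoC 1 /\ Cplus (aa k) (ab k) = RtoC (2 * cc k)
   /\ cc k * cc k + sa k * sa k = 1.
Proof.
  intros Hk. assert (H0 : 0 <= 1 - cc k * cc k).
  { unfold cc. replace (1 - (2 * k ^ 2 - 1) * (2 * k ^ 2 - 1)) with (4 * (k * k) * (1 - k * k)) by ring.
    apply Rmult_le_pos; nra. }
  assert (Hs : sa k * sa k = 1 - cc k * cc k) by (unfold sa; apply sqrt_sqrt; auto).
  unfold aa, ab; split; [|split]; [apply injective_projections; simpl; nra| apply injective_projections; simpl; ring | lra].
Qed.

Lemma Cmod_aa k : 0 < k < 1 -> Cmod (aa k) = 1 /\ Cmod (ab k) = 1.
Proof.
  intros Hk. destruct (aa_ab k Hk) as [_ [_ H]]. unfold Cmod, aa, ab; simpl.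
  split; (transitivity (sqrt 1); [f_equal; rewrite ?Rmult_1_r; lra | apply sqrt_1]).
Qed.

Lemma side d s q : 0 < d < 1 -> 0 <= s <= 1 -> 0 < Cmod (zz q) -> rho d s q <> 1 ->
  0 < (rho d s q * Cmod (zz q) - 1) * (Cmod (zz q) - 1).
Proof.
  intros Hd Hs Hr Hne. rewrite rho_r by auto.
  set (r := Cmod (zz q)) in *.
  destruct (Rle_dec r (1 + d)) as [h1|h1]; destruct (Rle_dec (1 - d) r) as [h2|h2];
  try apply Rnot_le_lt in h1; try apply Rnot_le_lt in h2.
  - exfalso. apply Hne. unfold rho. fold r. rewrite clamp_id by lra. field. lra.
  - assert (clamp d r = 1 - d) by (unfold clamp, Rmax, Rmin; repeat destruct Rle_dec; lra).
    rewrite H. assert (A : (1 - s) * r + s * (1 - d) - 1 < 0).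
    { assert (0 <= (1 - s) * (1 - d - r)) by (apply Rmult_le_pos; lra). nra. }
    replace (((1 - s) * r + s * (1 - d) - 1) * (r - 1)) with ((-((1 - s) * r + s * (1 - d) - 1)) * (1 - r)) by ring.
    apply Rmult_lt_0_compat; lra.
  - assert (clamp d r = 1 + d) by (unfold clamp, Rmax, Rmin; repeat destruct Rle_dec; lra).
    rewrite H. assert (A : (1 - s) * r + s * (1 + d) - 1 > 0).
    { assert (0 <= (1 - s) * (r - 1 - d)) by (apply Rmult_le_pos; lra). nra. }
    apply Rmult_lt_0_compat; lra.
  - lra.
Qed.

Lemma T_sq r : 0 < r -> Cmult (RtoC (/ sqrt r)) (RtoC (/ sqrt r)) = RtoC (/ r).
Proof.
  intros H. rewrite <- RtoC_mult. f_equal. rewrite <- Rinv_mult. rewrite sqrt_sqrt; lra.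
Qed.

Lemma z_ne_a k d s q : 0 < k < 1 -> 0 < (rho d s q * Cmod (zz q) - 1) * (Cmod (zz q) - 1) ->
  zz q <> aa k /\ zz q <> ab k.
Proof.
  intros Hk Hp. destruct (Cmod_aa k Hk) as [H1 H2].
  split; intro E; rewrite E in Hp; [rewrite H1 in Hp|rewrite H2 in Hp]; lra.
Qed.

Lemma Gamma_Fm k d s q : 0 < k < 1 -> 0 < d < 1 -> 0 <= s <= 1 -> Gamma k q ->
  Gamma k (Fm k d s q).
Proof.
  intros Hk Hd Hs HQ. destruct HQ as [HG [HN HU]].
  pose proof (zz_nz q HN) as Hr.
  pose proof (rho_pos d s q Hd Hs Hr) as Hrho.
  destruct (Req_dec (rho d s q) 1) as [E1|E1].
  { rewrite Fm_fix by auto. exact (conj HG (conj HN HU)). }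
  pose proof (side d s q Hd Hs Hr E1) as Hp.
  destruct (z_ne_a k d s q Hk Hp) as [Na Nb].
  destruct (aa_ab k Hk) as [Hab [Hsum Hcs]].
  assert (Q1 : 0 < fst (qf (aa k) (rho d s q) (zz q))).
  { apply qf_re; auto. }
  assert (Q2 : 0 < fst (qf (ab k) (rho d s q) (zz q))).
  { apply qf_re; auto. unfold ab; simpl; lra. }
  pose proof (Cmod_ge_0 (qf (aa k) (rho d s q) (zz q))).
  pose proof (Cmod_ge_0 (qf (ab k) (rho d s q) (zz q))).
  pose proof (csqrt_sq (qf (aa k) (rho d s q) (zz q)) ltac:(lra)) as S1.
  pose proof (csqrt_sq (qf (ab k) (rho d s q) (zz q)) ltac:(lra)) as S2.
  pose proof (T_sq _ Hrho) as S3.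
  pose proof (qf_mul (aa k) (rho d s q) (zz q) Na) as P1.
  pose proof (qf_mul (ab k) (rho d s q) (zz q) Nb) as P2.
  pose proof (zw_one q HN) as Hzw.
  assert (Hri : Cmult (RtoC (rho d s q)) (RtoC (/ rho d s q)) = RtoC 1).
  { rewrite <- RtoC_mult. f_equal. field. lra. }
  split; [|split].
  - unfold M2 at 1 2, N1 at 1. unfold Fm. simpl fst; simpl snd.
    set (r := rho d s q) in *. set (z := zz q) in *. set (w := ww q) in *.
    set (q1 := qf (aa k) r z) in *. set (q2 := qf (ab k) r z) in *.
    set (S := csqrt q1) in *. set (S' := csqrt q2) in *. set (T := RtoC (/ sqrt r)) in *.
    assert (EMM : Cmult (M2 q) (M2 q) = Cmult (RtoC 2) (Cminus (RtoC (cc k)) (N1 q))).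
    { unfold cc. rewrite <- HG. destruct (M2 q), (N1 q). apply injective_projections; simpl; field. }
    assert (Ezw : Cplus z w = Cmult (RtoC 2) (N1 q)).
    { unfold z, w, zz, ww. destruct (N1 q), (N3 q). apply injective_projections; simpl; ring. }
    assert (K : Cmult (Cmult (M2 q) (M2 q)) z = Copp (Cmult (Cminus z (aa k)) (Cminus z (ab k)))).
    { rewrite EMM. transitivity (RtoC 2 * RtoC (cc k) * z - (RtoC 2 * N1 q) * z)%C. ring.
      rewrite <- Ezw. transitivity (Cplus (RtoC 2 * RtoC (cc k) * z - z * z)%C (- (z * w))%C). ring.
      rewrite Hzw, <- Hab, <- RtoC_mult, <- Hsum. ring. }
    assert (Q : Cmult (Cmult (Cmult (M2 q) (M2 q)) q1) q2 =
                Cmult (Copp (Cmult (Cminus (Cmult (RtoC r) z) (aa k)) (Cminus (Cmult (RtoC r) z) (ab k)))) w).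
    { rewrite <- P1, <- P2.
      transitivity (Cmult (Cmult (Cmult (Cmult (M2 q) (M2 q)) z) (Cmult q1 q2)) w).
      transitivity (Cmult (Cmult (Cmult (M2 q) (M2 q)) q1) (Cmult q2 (Cmult z w))).
      rewrite Hzw. ring. ring. rewrite K. ring. }
    transitivity (Cmult (RtoC (1/2)) (Cplus (Cmult (Cmult (Cmult (Cmult (M2 q) (M2 q)) q1) q2) (RtoC (/ r)))
                                     (Cplus (Cmult (RtoC r) z) (Cmult (RtoC (/ r)) w)))).
    { rewrite <- S1, <- S2, <- S3. ring. }
    rewrite Q. rewrite key_alg; auto. rewrite Hsum. rewrite <- RtoC_mult. f_equal. unfold cc. field.
  - unfold OnN. unfold Fm, N1 at 1 2, N3 at 1 2; simpl fst; simpl snd.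
    rewrite onN_alg.
    transitivity (Cmult (Cmult (RtoC (rho d s q)) (RtoC (/ rho d s q))) (Cmult (zz q) (ww q))). ring.
    rewrite Hri, Hzw. ring.
  - intros. lra.
Qed.

Lemma cC_csqrt {X : UniformSpace} (f : X -> C) x :
  cC f x -> 0 < Cmod (f x) + fst (f x) -> cC (fun y => csqrt (f y)) x.
Proof.
  intros Hf Hp. pose proof (cC_mod f x Hf) as Hm. destruct Hf as [H1 H2].
  assert (Hs : continuous (fun y => sqrt ((Cmod (f y) + fst (f y)) / 2)) x).
  { apply cR_sqrt. apply cR_div; [apply cR_plus; auto|apply cR_const|lra]. }
  split; unfold csqrt; simpl; auto.
  apply cR_div; auto. apply cR_mult; auto. apply cR_const.
  assert (0 < sqrt ((Cmod (f x) + fst (f x)) / 2)) by (apply sqrt_lt_R0; lra). lra.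
Qed.

Lemma cont_loc_interval {X : UniformSpace} (f : X -> R) x a b :
  continuous f x -> a < f x < b -> locally x (fun y => a < f y < b).
Proof.
  intros Hf Hab.
  assert (He : 0 < Rmin (f x - a) (b - f x)) by (apply Rmin_glb_lt; lra).
  pose (e := mkposreal _ He).
  specialize (Hf (ball (f x) e) (locally_ball (f x) e)).
  eapply filter_imp; [|exact Hf]. intros y Hy.
  change (Rabs (f y - f x) < e) in Hy. simpl in Hy.
  pose proof (Rmin_l (f x - a) (b - f x)). pose proof (Rmin_r (f x - a) (b - f x)).
  apply Rabs_def2 in Hy. lra.
Qed.

Lemma cont_M2 {X : UniformSpace} (p : X -> pt) x : continuous p x -> cC (fun y => M2 (p y)) x.
Proof.
  intros H. apply cont_cC. unfold M2.
  apply (@cont_fst X C_UniformSpace C_UniformSpace (fun y => fst (p y))).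
  apply (@cont_fst X (prod_UniformSpace C_UniformSpace C_UniformSpace) C_UniformSpace p). exact H.
Qed.
Lemma cont_N1 {X : UniformSpace} (p : X -> pt) x : continuous p x -> cC (fun y => N1 (p y)) x.
Proof.
  intros H. apply cont_cC. unfold N1.
  apply (@cont_snd X C_UniformSpace C_UniformSpace (fun y => fst (p y))).
  apply (@cont_fst X (prod_UniformSpace C_UniformSpace C_UniformSpace) C_UniformSpace p). exact H.
Qed.
Lemma cont_N3 {X : UniformSpace} (p : X -> pt) x : continuous p x -> cC (fun y => N3 (p y)) x.
Proof.
  intros H. apply cont_cC. unfold N3.
  apply (@cont_snd X (prod_UniformSpace C_UniformSpace C_UniformSpace) C_UniformSpace p). exact H.
Qed.
Lemma cont_pt {X : UniformSpace} (p : X -> pt) x :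
  cC (fun y => M2 (p y)) x -> cC (fun y => N1 (p y)) x -> cC (fun y => N3 (p y)) x -> continuous p x.
Proof.
  intros H1 H2 H3.
  apply (continuous_ext (fun y => ((M2 (p y), N1 (p y)), N3 (p y)))).
  { intros y. unfold M2, N1, N3. destruct (p y) as [[] ]; reflexivity. }
  apply (@cont_pair X (prod_UniformSpace C_UniformSpace C_UniformSpace) C_UniformSpace).
  apply (@cont_pair X C_UniformSpace C_UniformSpace); apply cC_cont; auto.
  apply cC_cont; auto.
Qed.

Lemma rho_one d s q : 0 < Cmod (zz q) -> 1 - d <= Cmod (zz q) <= 1 + d -> rho d s q = 1.
Proof. intros. unfold rho. rewrite clamp_id by auto. field. lra. Qed.

Lemma Fm_cont {X : UniformSpace} k d (sg : X -> R) (p : X -> pt) x :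
  0 < k < 1 -> 0 < d < 1 -> continuous sg x -> continuous p x -> 0 <= sg x <= 1 -> OnN (p x) ->
  continuous (fun y => Fm k d (sg y) (p y)) x.
Proof.
  intros Hk Hd Hsg Hp Hs HN.
  pose proof (zz_nz _ HN) as Hr0.
  assert (Hz : cC (fun y => zz (p y)) x).
  { unfold zz. apply cC_plus. apply cont_N1; auto. apply cC_mult. apply cC_const. apply cont_N3; auto. }
  assert (Hw : cC (fun y => ww (p y)) x).
  { unfold ww. apply cC_minus. apply cont_N1; auto. apply cC_mult. apply cC_const. apply cont_N3; auto. }
  assert (Hr : continuous (fun y => Cmod (zz (p y))) x) by (apply cC_mod; auto).
  destruct (Rlt_dec (Rabs (Cmod (zz (p x)) - 1)) d) as [Hin|Hout].
  - apply Rabs_def2 in Hin.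
    apply (continuous_ext_loc _ p).
    + assert (L : locally x (fun y => 1 - d < Cmod (zz (p y)) < 1 + d))
        by (apply cont_loc_interval; auto; lra).
      eapply filter_imp; [|exact L]. intros y Hy. simpl in Hy.
      symmetry. apply Fm_fix. apply rho_one; lra.
    + auto.
  - assert (Hout' : d <= Rabs (Cmod (zz (p x)) - 1)) by (apply Rnot_lt_le; auto).
    assert (Hrho : continuous (fun y => rho d (sg y) (p y)) x).
    { unfold rho. apply cR_div; auto; [|lra].
      apply cR_plus; apply cR_mult; auto. apply cR_minus; auto; apply cR_const.
      unfold clamp. apply cR_max. apply cR_const. apply cR_min; auto; apply cR_const. }
    pose proof (rho_pos d (sg x) (p x) Hd Hs Hr0) as Hrp.
    destruct (Cmod_aa k Hk) as [Ha1 Hb1].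
    assert (Hne : forall a, Cmod a = 1 -> Cmod (Cminus (zz (p x)) a) <> 0).
    { intros a Ha E. apply Cmod_eq_0 in E.
      assert (zz (p x) = a) by (transitivity (Cplus (Cminus (zz (p x)) a) a); [ring|rewrite E; ring]).
      rewrite H, Ha in Hout'. rewrite Rminus_diag, Rabs_R0 in Hout'. lra. }
    assert (Hq : forall a, Cmod a = 1 -> fst a * fst a + snd a * snd a = 1 ->
              cC (fun y => csqrt (qf a (rho d (sg y) (p y)) (zz (p y)))) x).
    { intros a Ha Ha2. apply cC_csqrt.
      - unfold qf. apply cC_plus. apply cC_const. apply cC_mult. apply cC_mult; auto.
        apply cC_RtoC. apply cR_minus; auto; apply cR_const.
        apply cC_mult. apply cC_conj. apply cC_minus; auto; apply cC_const.
        apply cC_RtoC. apply cR_inv. apply cR_mult; apply cC_mod; apply cC_minus; auto; apply cC_const.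
        pose proof (Hne a Ha). apply Rmult_integral_contrapositive; auto.
      - pose proof (Cmod_ge_0 (qf a (rho d (sg x) (p x)) (zz (p x)))).
        enough (0 < fst (qf a (rho d (sg x) (p x)) (zz (p x)))) by lra.
        destruct (Req_dec (rho d (sg x) (p x)) 1) as [E1|E1].
        + rewrite E1. unfold qf. simpl. rewrite Rminus_diag. lra.
        + apply qf_re; auto. apply side; auto. }
    destruct (aa_ab k Hk) as [_ [_ Hcs]].
    apply cont_pt.
    + unfold Fm, M2 at 1. simpl.
      apply cC_mult. apply cC_mult. apply cC_mult. apply cont_M2; auto.
      apply Hq; auto. apply Hq; auto. unfold ab; simpl; lra.
      apply cC_RtoC. apply cR_inv. apply cR_sqrt; auto.
      assert (0 < sqrt (rho d (sg x) (p x))) by (apply sqrt_lt_R0; auto). lra.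
    + unfold Fm, N1 at 1. simpl.
      apply cC_mult. apply cC_const. apply cC_plus; apply cC_mult; auto; apply cC_RtoC; auto.
      apply cR_inv; auto; lra.
    + unfold Fm, N3 at 1. simpl.
      apply cC_mult. apply cC_const. apply cC_minus; apply cC_mult; auto; apply cC_RtoC; auto.
      apply cR_inv; auto; lra.
Qed.

Definition Dm (p q : pt) : R :=
  Cmod (Cminus (M2 p) (M2 q)) + Cmod (Cminus (N1 p) (N1 q)) + Cmod (Cminus (N3 p) (N3 q)).

Lemma dist3_Dm p q : dist3 p q <= Dm p q.
Proof.
  unfold dist3, Dm.
  pose proof (Cmod_ge_0 (Cminus (M2 p) (M2 q))). pose proof (Cmod_ge_0 (Cminus (N1 p) (N1 q))).
  pose proof (Cmod_ge_0 (Cminus (N3 p) (N3 q))).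
  set (a := Cmod (Cminus (M2 p) (M2 q))) in *. set (b := Cmod (Cminus (N1 p) (N1 q))) in *.
  set (c := Cmod (Cminus (N3 p) (N3 q))) in *.
  rewrite <- (sqrt_pow2 (a + b + c)) by lra. apply sqrt_le_1_alt. simpl. nra.
Qed.

Lemma Cmod_sub_sym (x y : C) : Cmod (Cminus x y) = Cmod (Cminus y x).
Proof. rewrite <- Cmod_opp. f_equal. ring. Qed.

Lemma Cmod_tri3 (x y z : C) : Cmod (Cminus x z) <= Cmod (Cminus x y) + Cmod (Cminus y z).
Proof.
  replace (Cminus x z) with (Cplus (Cminus x y) (Cminus y z)) by ring. apply Cmod_triangle.
Qed.

Lemma Dm_tri p q r : Dm p r <= Dm p q + Dm q r.
Proof.
  unfold Dm. pose proof (Cmod_tri3 (M2 p) (M2 q) (M2 r)). pose proof (Cmod_tri3 (N1 p) (N1 q) (N1 r)).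
  pose proof (Cmod_tri3 (N3 p) (N3 q) (N3 r)). lra.
Qed.

Lemma Dm_cont (psi : R -> pt) x0 : continuous psi x0 ->
  forall eps, 0 < eps -> exists eta, 0 < eta /\ forall x, Rabs (x - x0) < eta -> Dm (psi x0) (psi x) < eps.
Proof.
  intros Hc eps He.
  assert (L : forall (f : R -> C), cC f x0 ->
             locally x0 (fun y => -1 < Cmod (Cminus (f x0) (f y)) < eps / 3)).
  { intros f Hf. apply cont_loc_interval.
    apply cC_mod. apply cC_minus; auto. apply cC_const.
    replace (Cminus (f x0) (f x0)) with (RtoC 0) by ring. rewrite Cmod_0. lra. }
  pose proof (L _ (cont_M2 psi x0 Hc)) as L1.
  pose proof (L _ (cont_N1 psi x0 Hc)) as L2.
  pose proof (L _ (cont_N3 psi x0 Hc)) as L3.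
  destruct (filter_and _ _ L1 (filter_and _ _ L2 L3)) as [eta Heta].
  exists eta. split. apply cond_pos. intros x Hx.
  destruct (Heta x) as [A1 [A2 A3]]. exact Hx. unfold Dm. lra.
Qed.

Lemma unif (U : pt -> Prop) (psi : R -> pt) lo hi : lo <= hi ->
  (forall x, continuous psi x) ->
  (forall x, lo <= x <= hi -> exists r, 0 < r /\ forall q, OnN q -> Dm (psi x) q < r -> U q) ->
  exists dl, 0 < dl /\ forall x, lo <= x <= hi -> forall q, OnN q -> Dm (psi x) q < dl -> U q.
Proof.
  intros Hlh Hc Hr.
  set (E := fun y => lo <= y <= hi /\ exists dl, 0 < dl /\
              forall x, lo <= x <= y -> forall q, OnN q -> Dm (psi x) q < dl -> U q).
  assert (Elo : E lo).
  { split. lra. destruct (Hr lo) as [r [Hr0 Hr1]]. lra. exists r. split; auto.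
    intros x Hx. replace x with lo by lra. auto. }
  assert (Eb : bound E). { exists hi. intros y [Hy _]. lra. }
  destruct (completeness E Eb (ex_intro _ lo Elo)) as [m [Hub Hlub]].
  assert (Hm1 : lo <= m) by (apply Hub; auto).
  assert (Hm2 : m <= hi). { apply Hlub. intros y [Hy _]. lra. }
  destruct (Hr m (conj Hm1 Hm2)) as [rm [Hrm HUm]].
  destruct (Dm_cont psi m (Hc m) (rm / 2) ltac:(lra)) as [eta [Heta Hcont]].
  assert (Hy : exists y, E y /\ m - eta < y).
  { apply NNPP. intro Hn.
    assert (m <= m - eta).
    { apply Hlub. intros y Ey. apply Rnot_lt_le. intro Hl. apply Hn. exists y; auto. }
    lra. }
  destruct Hy as [y [[Hy1 [dy [Hdy HUy]]] Hym]].
  assert (Hyy : y <= m) by (apply Hub; split; [auto| exists dy; auto]).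
  set (y' := Rmin hi (m + eta / 2)).
  assert (Ey' : E y').
  { split. unfold y'. split. apply Rmin_glb; lra. apply Rmin_l.
    exists (Rmin dy (rm / 2)). split. apply Rmin_glb_lt; lra.
    intros x Hx q Hq HD.
    pose proof (Rmin_l dy (rm / 2)). pose proof (Rmin_r dy (rm / 2)).
    destruct (Rle_dec x y).
    - apply (HUy x); auto. lra. lra.
    - apply HUm; auto.
      assert (Hxm : Rabs (x - m) < eta).
      { pose proof (Rmin_r hi (m + eta / 2)). apply Rabs_def1; unfold y' in Hx; lra. }
      pose proof (Hcont x Hxm). pose proof (Dm_tri (psi m) (psi x) q). lra. }
  assert (Hy'm : y' <= m) by (apply Hub; auto).
  assert (Hmhi : m = hi).
  { destruct (Req_dec m hi); auto. exfalso. unfold y' in Hy'm.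
    unfold Rmin in Hy'm. destruct (Rle_dec hi (m + eta / 2)); lra. }
  assert (y' = hi) by (unfold y'; unfold Rmin; destruct (Rle_dec hi (m + eta/2)); lra).
  destruct Ey' as [_ [dl [Hdl HU]]]. exists dl. split; auto. intros x Hx. apply HU. lra.
Qed.

Definition psi (s1 s2 x : R) : pt :=
  (RtoC (s1 * sqrt (2 - 2 * x)), RtoC x, RtoC (s2 * sqrt (1 - x * x))).

Lemma psi_cont s1 s2 x : continuous (psi s1 s2) x.
Proof.
  apply cont_pt; unfold psi, M2, N1, N3; simpl; apply cC_RtoC.
  - apply cR_mult. apply cR_const. apply cR_sqrt. apply cR_minus. apply cR_const.
    apply cR_mult. apply cR_const. apply continuous_id.
  - apply continuous_id.
  - apply cR_mult. apply cR_const. apply cR_sqrt. apply cR_minus. apply cR_const.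
    apply cR_mult; apply continuous_id.
Qed.

Lemma Cmod_RR a b : Cmod (Cminus (RtoC a) (RtoC b)) = Rabs (a - b).
Proof. rewrite <- Cmod_R. f_equal. apply injective_projections; simpl; ring. Qed.

Lemma psi_Gamma s1 s2 x : s1 * s1 = 1 -> s2 * s2 = 1 -> -1 <= x < 1 ->
  Gamma 1 (psi s1 s2 x) /\ is_real_pt (psi s1 s2 x).
Proof.
  intros H1 H2 Hx.
  assert (E1 : sqrt (2 - 2 * x) * sqrt (2 - 2 * x) = 2 - 2 * x) by (apply sqrt_sqrt; lra).
  assert (E2 : sqrt (1 - x * x) * sqrt (1 - x * x) = 1 - x * x) by (apply sqrt_sqrt; nra).
  split; [split; [|split]|].
  - unfold psi, M2, N1; simpl. apply injective_projections; simpl; [|ring].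
    replace (s1 * sqrt (2 - 2 * x) * (s1 * sqrt (2 - 2 * x))) with ((s1 * s1) * (sqrt (2 - 2 * x) * sqrt (2 - 2 * x))) by ring.
    rewrite H1, E1. field.
  - unfold OnN, psi, N1, N3; simpl. apply injective_projections; simpl; [|ring].
    replace (s2 * sqrt (1 - x * x) * (s2 * sqrt (1 - x * x))) with ((s2 * s2) * (sqrt (1 - x * x) * sqrt (1 - x * x))) by ring.
    rewrite H2, E2. ring.
  - intros _ E. unfold psi, u_eq in E. injection E. intros. lra.
  - unfold is_real_pt, psi, M2, N1, N3; simpl; auto.
Qed.

Lemma psi_Omega s1 s2 x : s1 * s1 = 1 -> s2 * s2 = 1 -> -1 <= x <= 1 -> Omega (psi s1 s2 x).
Proof.
  intros H1 H2 Hx r Hr.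
  destruct (Req_dec x 1) as [E|E].
  - subst x. set (eta := Rmin 1 (r * r / 8)).
    assert (He : 0 < eta) by (apply Rmin_glb_lt; nra).
    assert (He1 : eta <= 1) by apply Rmin_l. assert (He2 : eta <= r * r / 8) by apply Rmin_r.
    exists (psi s1 s2 (1 - eta)). destruct (psi_Gamma s1 s2 (1 - eta)) as [G R]; auto; try lra.
    split; auto. split; auto.
    unfold dist3, psi, M2, N1, N3; simpl fst; simpl snd. rewrite !Cmod_RR.
    replace (2 - 2 * 1) with 0 by ring. replace (1 - 1 * 1) with 0 by ring. rewrite sqrt_0.
    rewrite !pow2_abs. 
    replace ((s1 * 0 - s1 * sqrt (2 - 2 * (1 - eta))) ^ 2) with ((s1 * s1) * (sqrt (2 * eta) * sqrt (2 * eta))) by (replace (2 - 2 * (1 - eta)) with (2 * eta) by ring; ring).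
    replace ((s2 * 0 - s2 * sqrt (1 - (1 - eta) * (1 - eta))) ^ 2) with ((s2 * s2) * (sqrt (1 - (1 - eta) * (1 - eta)) * sqrt (1 - (1 - eta) * (1 - eta)))) by ring.
    rewrite H1, H2, !sqrt_sqrt by nra.
    rewrite <- (sqrt_pow2 r) by lra. apply sqrt_lt_1_alt. split. nra. simpl. nra.
  - exists (psi s1 s2 x). destruct (psi_Gamma s1 s2 x) as [G R]; auto; try lra.
    split; auto. split; auto.
    unfold dist3.
    unfold psi, M2, N1, N3; simpl fst; simpl snd. rewrite !Cmod_RR, !Rminus_diag, Rabs_R0.
    simpl. replace (0 * (0 * 1) + 0 * (0 * 1) + 0 * (0 * 1)) with 0 by ring. rewrite sqrt_0. auto.
Qed.

Lemma core k d q : 0 < k < 1 -> 0 < d <= 1/2 -> Gamma k q -> 1 - d <= Cmod (zz q) <= 1 + d ->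
  exists s1 s2 x, s1 * s1 = 1 /\ s2 * s2 = 1 /\ -1 <= x <= 1 /\
    Dm (psi s1 s2 x) q <= sqrt (2 * Rabs (cc k - 1) + 3 * d) + 3 * d.
Proof.
  intros Hk Hd [HG [HN _]] Hr.
  pose proof (zw_one q HN) as Hzw.
  set (z := zz q) in *. set (w := ww q) in *. set (r := Cmod z) in *.
  assert (Hr0 : 0 < r) by lra.
  pose proof (Cmod_sq z) as Hsq. fold r in Hsq.
  set (x := fst z / r). set (t := snd z / r).
  assert (Hxt : x * x + t * t = 1). { unfold x, t. replace (fst z / r * (fst z / r) + snd z / r * (snd z / r)) with ((fst z * fst z + snd z * snd z) / (r*r)) by (field; lra). rewrite <- Hsq. field. lra. }
  set (e := (x, t) : C). set (eb := (x, - t) : C).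
  assert (He : e = Cmult (RtoC (/ r)) z).
  { unfold e, x, t. destruct z. apply injective_projections; simpl; field; lra. }
  assert (Heeb : Cmult e eb = RtoC 1).
  { unfold e, eb. apply injective_projections; simpl; lra. }
  assert (Hmode : Cmod eb = 1).
  { unfold Cmod, eb; simpl. transitivity (sqrt 1); [f_equal; transitivity (x*x+t*t); [ring|exact Hxt] | apply sqrt_1]. }
  assert (A : Cmod (Cminus z e) = Rabs (r - 1)).
  { rewrite He. replace (Cminus z (Cmult (RtoC (/ r)) z)) with (Cmult (RtoC (1 - / r)) z)
      by (rewrite RtoC_minus; ring).
    rewrite Cmod_mult, Cmod_R. fold r. replace (r - 1) with ((1 - / r) * r) by (field; lra).
    rewrite Rabs_mult, (Rabs_right r); lra. }
  assert (Hw : Cmod w = / r).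
  { assert (Cmod z * Cmod w = 1) by (rewrite <- Cmod_mult, Hzw; apply Cmod_1).
    fold r in H. apply Rmult_eq_reg_l with r; [|lra]. rewrite H. field. lra. }
  assert (B : Cmod (Cminus w eb) = Rabs (r - 1) / r).
  { replace (Cminus w eb) with (Cmult (Cmult w eb) (Cminus e z)).
    rewrite !Cmod_mult, Hw, Hmode, Cmod_sub_sym, A. field. lra.
    transitivity (Cminus (Cmult w (Cmult e eb)) (Cmult eb (Cmult z w))). ring.
    rewrite Heeb, Hzw. ring. }
  assert (Ad : Rabs (r - 1) <= d) by (apply Rabs_le; lra).
  assert (Bd : Rabs (r - 1) / r <= 2 * d).
  { apply Rmult_le_reg_r with r; auto. field_simplify; [|lra]. pose proof (Rabs_pos (r - 1)). nra. }
  assert (EN1 : Cminus (RtoC x) (N1 q) = Cmult (RtoC (-1/2)) (Cplus (Cminus z e) (Cminus w eb))).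
  { unfold z, w, zz, ww, e, eb. destruct (N1 q), (N3 q). apply injective_projections; simpl; field. }
  assert (EN3 : Cminus (RtoC t) (N3 q) = Cmult (Cmult (RtoC (-1/2)) (Copp Ci)) (Cminus (Cminus z e) (Cminus w eb))).
  { unfold z, w, zz, ww, e, eb. destruct (N1 q), (N3 q). apply injective_projections; simpl; field. }
  assert (Hhalf : Cmod (RtoC (-1/2)) = 1/2) by (rewrite Cmod_R, Rabs_left; lra).
  assert (Hci : Cmod (Copp Ci) = 1) by (rewrite Cmod_opp; apply Cmod_Ci).
  assert (BN1 : Cmod (Cminus (RtoC x) (N1 q)) <= 3 / 2 * d).
  { rewrite EN1, Cmod_mult, Hhalf. pose proof (Cmod_triangle (Cminus z e) (Cminus w eb)). lra. }
  assert (BN3 : Cmod (Cminus (RtoC t) (N3 q)) <= 3 / 2 * d).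
  { rewrite EN3, !Cmod_mult, Hhalf, Hci.
    replace (Cminus (Cminus z e) (Cminus w eb)) with (Cplus (Cminus z e) (Copp (Cminus w eb))) by ring.
    pose proof (Cmod_triangle (Cminus z e) (Copp (Cminus w eb))). rewrite Cmod_opp in H. lra. }
  assert (Hx : -1 <= x <= 1) by nra.
  set (m := sqrt (2 - 2 * x)).
  assert (Hm : m * m = 2 - 2 * x) by (apply sqrt_sqrt; lra).
  assert (Hm0 : 0 <= m) by apply sqrt_pos.
  set (M := M2 q) in *.
  assert (EMM : Cminus (Cmult M M) (RtoC (m * m)) =
     Cminus (RtoC (2 * (cc k - 1))) (Cplus (Cminus z e) (Cminus w eb))).
  { assert (EMM0 : Cmult M M = Cmult (RtoC 2) (Cminus (RtoC (cc k)) (N1 q))).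
    { unfold cc. rewrite <- HG. unfold M. destruct (M2 q), (N1 q). apply injective_projections; simpl; field. }
    rewrite EMM0, Hm. unfold z, w, zz, ww, e, eb. clearbody x t. destruct (N1 q), (N3 q).
    apply injective_projections; simpl; field. }
  set (X := Cmod (Cminus (Cmult M M) (RtoC (m * m)))).
  assert (BX : X <= 2 * Rabs (cc k - 1) + 3 * d).
  { unfold X. rewrite EMM.
    replace (Cminus (RtoC (2 * (cc k - 1))) (Cplus (Cminus z e) (Cminus w eb))) with
      (Cplus (RtoC (2 * (cc k - 1))) (Copp (Cplus (Cminus z e) (Cminus w eb)))) by ring.
    pose proof (Cmod_triangle (RtoC (2 * (cc k - 1))) (Copp (Cplus (Cminus z e) (Cminus w eb)))).
    rewrite Cmod_opp, Cmod_R, Rabs_mult, (Rabs_right 2) in H by lra.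
    pose proof (Cmod_triangle (Cminus z e) (Cminus w eb)). lra. }
  assert (Hprod : Cmod (Cminus M (RtoC m)) * Cmod (Cplus M (RtoC m)) = X).
  { unfold X. rewrite <- Cmod_mult. f_equal. rewrite RtoC_mult. ring. }
  assert (Hsel : exists s1, s1 * s1 = 1 /\ Cmod (Cminus (RtoC (s1 * m)) M) <= sqrt X).
  { pose proof (Cmod_ge_0 (Cminus M (RtoC m))). pose proof (Cmod_ge_0 (Cplus M (RtoC m))).
    pose proof (sqrt_pos X). assert (HX0 : 0 <= X) by (unfold X; apply Cmod_ge_0).
    pose proof (sqrt_sqrt X HX0).
    destruct (Rle_dec (Cmod (Cminus M (RtoC m))) (sqrt X)).
    - exists 1. split. ring. rewrite Cmod_sub_sym. rewrite Rmult_1_l. auto.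
    - exists (-1). split. ring.
      replace (Cminus (RtoC (-1 * m)) M) with (Copp (Cplus M (RtoC m))) by (unfold M; destruct (M2 q); apply injective_projections; simpl; ring).
      rewrite Cmod_opp. apply Rnot_le_lt in n. nra. }
  destruct Hsel as [s1 [Hs1 Hsel]].
  set (s2 := if Rle_dec 0 t then 1 else -1).
  assert (Hs2 : s2 * s2 = 1) by (unfold s2; destruct Rle_dec; ring).
  assert (Ht : s2 * sqrt (1 - x * x) = t).
  { replace (1 - x * x) with (t * t) by lra. unfold s2. destruct Rle_dec.
    rewrite sqrt_square by lra. ring. replace (t * t) with ((-t) * (-t)) by ring. rewrite sqrt_square; lra. }
  exists s1, s2, x. split; auto. split; auto. split; auto.
  unfold Dm, psi, M2 at 1, N1 at 1, N3 at 1; simpl fst; simpl snd. rewrite Ht. fold m. fold M.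
  pose proof (sqrt_le_1_alt _ _ BX). lra.
Qed.

Lemma sign_cases s : s * s = 1 -> s = 1 \/ s = -1.
Proof. intros H. assert ((s - 1) * (s + 1) = 0) by nra. apply Rmult_integral in H0. lra. Qed.

Lemma annulus_U U : nbhd_of_Omega_in_N U -> exists d, 0 < d <= 1/2 /\
  forall k, 0 < k < 1 -> 1 - k < d -> forall q, Gamma k q -> 1 - d <= Cmod (zz q) <= 1 + d -> U q.
Proof.
  intros [HUN HUO].
  assert (R : forall s1 s2, s1 * s1 = 1 -> s2 * s2 = 1 -> exists dl, 0 < dl /\
     forall x, -1 <= x <= 1 -> forall q, OnN q -> Dm (psi s1 s2 x) q < dl -> U q).
  { intros s1 s2 H1 H2. apply unif. lra. apply psi_cont.
    intros x Hx. destruct (HUO (psi s1 s2 x) (psi_Omega s1 s2 x H1 H2 Hx)) as [r [Hr HU]].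
    exists r. split; auto. intros q Hq HD. apply HU; auto. pose proof (dist3_Dm (psi s1 s2 x) q). lra. }
  destruct (R 1 1) as [d1 [Hd1 U1]]; try ring.
  destruct (R 1 (-1)) as [d2 [Hd2 U2]]; try ring.
  destruct (R (-1) 1) as [d3 [Hd3 U3]]; try ring.
  destruct (R (-1) (-1)) as [d4 [Hd4 U4]]; try ring.
  set (d0 := Rmin 1 (Rmin (Rmin d1 d2) (Rmin d3 d4))).
  assert (Hd0 : 0 < d0) by (unfold d0; repeat apply Rmin_glb_lt; lra).
  assert (Hd01 : d0 <= 1) by (unfold d0; apply Rmin_l).
  assert (Hdi : d0 <= d1 /\ d0 <= d2 /\ d0 <= d3 /\ d0 <= d4).
  { unfold d0. pose proof (Rmin_r 1 (Rmin (Rmin d1 d2) (Rmin d3 d4))).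
    pose proof (Rmin_l (Rmin d1 d2) (Rmin d3 d4)). pose proof (Rmin_r (Rmin d1 d2) (Rmin d3 d4)).
    pose proof (Rmin_l d1 d2). pose proof (Rmin_r d1 d2). pose proof (Rmin_l d3 d4). pose proof (Rmin_r d3 d4).
    lra. }
  exists (d0 * d0 / 64). split. split. nra. nra.
  intros k Hk Hkd q Hq Hr.
  destruct (core k (d0 * d0 / 64) q Hk ltac:(split; nra) Hq Hr) as [s1 [s2 [x [Hs1 [Hs2 [Hx HD]]]]]].
  assert (Hc : Rabs (cc k - 1) < 4 * (d0 * d0 / 64)).
  { unfold cc. rewrite Rabs_left by nra. nra. }
  assert (Hsq : sqrt (2 * Rabs (cc k - 1) + 3 * (d0 * d0 / 64)) < d0 / 2).
  { rewrite <- (sqrt_pow2 (d0 / 2)) by lra. apply sqrt_lt_1_alt. split.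
    pose proof (Rabs_pos (cc k - 1)). nra. simpl. nra. }
  assert (HD' : Dm (psi s1 s2 x) q < d0) by nra.
  destruct Hq as [_ [HN _]].
  destruct (sign_cases s1 Hs1); destruct (sign_cases s2 Hs2); subst.
  - apply (U1 x); auto; lra.
  - apply (U2 x); auto; lra.
  - apply (U3 x); auto; lra.
  - apply (U4 x); auto; lra.
Qed.

Definition cl01 (t : R) := Rmax 0 (Rmin 1 t).
Lemma cl01_in t : 0 <= cl01 t <= 1.
Proof. unfold cl01, Rmax, Rmin; repeat destruct Rle_dec; lra. Qed.
Lemma cl01_id t : 0 <= t <= 1 -> cl01 t = t.
Proof. intros; unfold cl01, Rmax, Rmin; repeat destruct Rle_dec; lra. Qed.
Lemma cl01_cont {X : UniformSpace} (f : X -> R) x : continuous f x -> continuous (fun y => cl01 (f y)) x.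
Proof. intros; unfold cl01; apply cR_max; [apply cR_const|apply cR_min; auto; apply cR_const]. Qed.

Theorem lemma5 :
  forall U : pt -> Prop, nbhd_of_Omega_in_N U ->
  exists eps, 0 < eps /\
    forall k, 0 < k -> 0 < 1 - k < eps ->
      exists p, Gamma k p /\ U p /\ pi1_generated_by_loops_in (Gamma k) U p.
Proof.
  intros U HU. destruct (annulus_U U HU) as [d [Hd HA]].
  exists d. split. lra. intros k Hk0 Hk.
  assert (Hk1 : 0 < k < 1) by lra.
  assert (Hd1 : 0 < d < 1) by lra.
  set (p := (RtoC (2 * k), RtoC (-1), RtoC 0) : pt).
  assert (Hzp : Cmod (zz p) = 1).
  { unfold zz, p, N1, N3; simpl. rewrite <- Cmod_opp. 
    replace (Copp (Cplus (RtoC (-1)) (Cmult Ci (RtoC 0)))) with (RtoC 1)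
      by (apply injective_projections; simpl; ring). apply Cmod_1. }
  assert (Gp : Gamma k p).
  { split; [|split].
    - unfold p, M2, N1; simpl. apply injective_projections; simpl; field.
    - unfold OnN, p, N1, N3; simpl. apply injective_projections; simpl; ring.
    - intros; lra. }
  assert (Fp : forall s, Fm k d s p = p).
  { intros s. apply Fm_fix. apply rho_one; lra. }
  assert (Fid : forall q, OnN q -> Fm k d 0 q = q).
  { intros q Hq. apply Fm_fix. pose proof (zz_nz q Hq). unfold rho. field. lra. }
  assert (FU : forall q, Gamma k q -> U (Fm k d 1 q)).
  { intros q Hq. pose proof (Gamma_Fm k d 1 q Hk1 Hd1 ltac:(lra) Hq) as G.
    apply (HA k Hk1 ltac:(lra)); auto.
    destruct Hq as [_ [HN _]]. pose proof (zz_nz q HN) as Hr.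
    pose proof (rho_pos d 1 q Hd1 ltac:(lra) Hr) as Hrp.
    rewrite zz_Fm by lra. rewrite Cmod_mult, Cmod_R, Rabs_right by lra.
    rewrite rho_r by auto. pose proof (clamp_in d (Cmod (zz q)) ltac:(lra)). lra. }
  exists p. split; auto. split. apply (HA k Hk1 ltac:(lra) p Gp); lra.
  intros g [[Hgc Hgin] [Hg0 Hg1]].
  set (h := fun t => Fm k d 1 (g (cl01 t))).
  exists ((true, h) :: nil). split.
  - intros bg [E|[]]. subst bg. simpl. split; [split|split].
    + intros t. unfold h. apply Fm_cont; auto. apply cR_const.
      apply (continuous_comp (fun y => cl01 y) g). apply cl01_cont, continuous_id. apply Hgc.
      lra. destruct (Hgin (cl01 t) (cl01_in t)) as [_ [HN _]]; auto.
    + intros t Ht. unfold h. split. apply Gamma_Fm; auto; try lra. apply Hgin, cl01_in.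
      apply FU. apply Hgin, cl01_in.
    + unfold h. rewrite cl01_id, Hg0 by lra. apply Fp.
    + unfold h. rewrite cl01_id, Hg1 by lra. apply Fp.
  - exists (fun z => Fm k d (cl01 (fst z)) (g (Rmin 1 (cl01 (snd z) * (1 + cl01 (fst z)))))).
    assert (Htau : forall z, 0 <= Rmin 1 (cl01 (snd z) * (1 + cl01 (fst z))) <= 1).
    { intros z. pose proof (cl01_in (snd z)). pose proof (cl01_in (fst z)).
      unfold Rmin; destruct Rle_dec; nra. }
    split; [|split; [|split]].
    + intros z. apply Fm_cont; auto.
      * apply cl01_cont. destruct z. apply continuous_fst.
      * apply (continuous_comp (fun y => Rmin 1 (cl01 (snd y) * (1 + cl01 (fst y)))) g); [|apply Hgc].
        apply cR_min. apply cR_const. apply cR_mult. apply cl01_cont. destruct z; apply continuous_snd.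
        apply cR_plus. apply cR_const. apply cl01_cont. destruct z; apply continuous_fst.
      * apply cl01_in.
      * destruct (Hgin _ (Htau z)) as [_ [HN _]]; auto.
    + intros s t Hs Ht. simpl. apply Gamma_Fm; auto. apply cl01_in. apply Hgin. apply (Htau (s, t)).
    + intros t Ht. simpl. split.
      * rewrite (cl01_id 0), (cl01_id t) by lra. replace (Rmin 1 (t * (1 + 0))) with t
          by (unfold Rmin; destruct Rle_dec; lra).
        apply Fid. destruct (Hgin t Ht) as [_ [HN _]]; auto.
      * rewrite (cl01_id 1), (cl01_id t) by lra. unfold word_loop, loop_concat, const_loop; simpl.
        destruct (Rle_dec t (1/2)).
        -- unfold h. rewrite cl01_id by lra. f_equal. f_equal. unfold Rmin; destruct Rle_dec; lra.
        -- replace (Rmin 1 (t * (1 + 1))) with 1 by (unfold Rmin; destruct Rle_dec; lra).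
           rewrite Hg1. apply Fp.
    + intros s Hs. simpl. rewrite (cl01_id 0), (cl01_id 1) by lra. split.
      * replace (Rmin 1 (0 * (1 + cl01 s))) with 0 by (unfold Rmin; destruct Rle_dec; lra).
        rewrite Hg0. apply Fp.
      * replace (Rmin 1 (1 * (1 + cl01 s))) with 1.
        rewrite Hg1. apply Fp. pose proof (cl01_in s). unfold Rmin; destruct Rle_dec; lra.
Qed.
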